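(* Let $q$ be a non-negative integer and $\Lambda$ a unital commutative ring which is $q$-torsion-free. Let $\mathfrak g$ be a Lie algebra over $\Lambda$ with free presentation $0\to\mathfrak r\to\mathfrak f\xrightarrow{\partial}\mathfrak g\to0$, let $\mathfrak c=\mathfrak f/(\mathfrak r\#_q\mathfrak f)$ and $\bar\partial\colon\mathfrak c\to\mathfrak g$ the map induced by $\partial$. Then for $c\in\mathfrak c$, $c\in Z(\mathfrak c)$ if and only if $\bar\partial(c)\in Z^{\curlywedge}_q(\mathfrak g)$.
   Context: All Lie algebras are over $\Lambda$; $Z(\mathfrak c)$ is the center of $\mathfrak c$. $\mathfrak r\#_q\mathfrak f$ is the $\Lambda$-submodule (an ideal) of $\mathfrak f$ generated by all $[r,f]$ and $qr'$ with $r,r'\in\mathfrak r$, $f\in\mathfrak f$. For $q\ge1$, the non-abelian $q$-exterior square $\mathfrak g\wedge^q\mathfrak g$ is the Lie algebra generated by symbols $h\wedge g$ and $\{h\}$ ($h,g\in\mathfrak g$) subject to, for all $h,h',g,g'\in\mathfrak g$, $\lambda,\lambda'\in\Lambda$: (1) $\lambda(h\wedge g)=\lambda h\wedge g=h\wedge\lambda g$; (2),(3) additivity in each variable; (4) $[h,h']\wedge g=h\wedge[h',g]-h'\wedge[h,g]$; (5) $h\wedge[g,g']=[g',h]\wedge g-[g,h]\wedge g'$; (6) $[h\wedge g,h'\wedge g']=[h,g]\wedge[h',g']$; (7) $[\{h'\},h\wedge g]=[qh',h]\wedge g+h\wedge[qh',g]$; (8) $\{\lambda h+\lambda'h'\}=\lambda\{h\}+\lambda'\{h'\}$;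 (9) $[\{h\},\{h'\}]=qh\wedge qh'$; (10) $\{[h,g]\}=q(h\wedge g)$; (11) $h\wedge h=0$. For $q=0$, generated by the $h\wedge g$ subject to (1)–(6) and (11). The $q$-exterior center in the sense of Ellis is $Z^{\curlywedge}_q(\mathfrak g)=\{g\in\mathfrak g\mid g\wedge x=0 \text{ in }\mathfrak g\wedge^q\mathfrak g\text{ for all }x\in\mathfrak g\}$. *)

(* Defs.v *)
From HB Require Import structures.
From mathcomp Require Import all_boot all_order all_algebra.
Set Implicit Arguments. Unset Strict Implicit. Unset Printing Implicit Defensive.
Import GRing.Theory.
Local Open Scope ring_scope.

Definition lie_axioms (R : pzRingType) (V : lmodType R) (br : V -> V -> V) : Prop :=
  [/\ (forall (a : R) (x y z : V), br (a *: x + y) z = a *: br x z + br y z),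
      (forall (a : R) (x y z : V), br z (a *: x + y) = a *: br z x + br z y),
      (forall x : V, br x x = 0) &
      (forall x y z : V, br x (br y z) + br y (br z x) + br z (br x y) = 0)].

Record lieAlgebra (R : pzRingType) := LieAlgebra {
  lie_sort :> lmodType R;
  lie_br : lie_sort -> lie_sort -> lie_sort;
  lie_ax : lie_axioms lie_br }.
Arguments lie_br {R l}.

Definition lie_hom (R : pzRingType) (L1 L2 : lieAlgebra R) (phi : L1 -> L2) : Prop :=
  (forall (a : R) (x y : L1), phi (a *: x + y) = a *: phi x + phi y) /\
  (forall x y : L1, phi (lie_br x y) = lie_br (phi x) (phi y)).

Definition is_free_lie (R : pzRingType) (X : Type) (F : lieAlgebra R) (i : X -> F) : Prop :=
  forall (L : lieAlgebra R) (phi : X -> L),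
    (exists psi : F -> L, lie_hom psi /\ forall x, psi (i x) = phi x) /\
    (forall psi1 psi2 : F -> L, lie_hom psi1 -> lie_hom psi2 ->
       (forall x, psi1 (i x) = psi2 (i x)) -> forall y, psi1 y = psi2 y).

(* Lambda is q-torsion-free: q*l = 0 implies l = 0.  For q = 0 the condition
   is taken to be vacuous. *)
Definition q_torsion_free (R : pzRingType) (q : nat) : Prop :=
  (0 < q)%N -> forall l : R, l *+ q = 0 -> l = 0.

Inductive span (R : pzRingType) (V : lmodType R) (S : V -> Prop) : V -> Prop :=
  | span_gen x : S x -> span S x
  | span_0 : span S 0
  | span_add x y : span S x -> span S y -> span S (x + y)
  | span_scale (a : R) x : span S x -> span S (a *: x).

Definition sharp_gens (R : pzRingType) (F : lieAlgebra R) (r : F -> Prop) (q : nat)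
  (x : F) : Prop :=
  (exists (s : F) (y : F), r s /\ x = lie_br s y) \/ (exists s : F, r s /\ x = s *+ q).

Definition sharp (R : pzRingType) (F : lieAlgebra R) (r : F -> Prop) (q : nat) : F -> Prop :=
  span (sharp_gens r q).

Definition lie_center (R : pzRingType) (L : lieAlgebra R) (z : L) : Prop :=
  forall y : L, lie_br z y = 0.

(* A q-exterior pairing of G into a Lie algebra L: images w h g of the
   generators h /\ g and b h of {h}, satisfying relations (1)-(11) of the
   definition of G /\^q G (for q = 0 only (1)-(6),(11) are imposed and b
   plays no role). *)
Definition qext_pairing (R : pzRingType) (q : nat) (G L : lieAlgebra R)
  (w : G -> G -> L) (b : G -> L) : Prop :=
  [/\ [/\ (forall (l : R) (h g : G), l *: w h g = w (l *: h) g /\ l *: w h g = w h (l *: g)),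
      (forall h h' g : G, w (h + h') g = w h g + w h' g),
                    (forall h g g' : G, w h (g + g') = w h g + w h g') &
      (forall h : G, w h h = 0)],
      (forall h h' g : G, w (lie_br h h') g = w h (lie_br h' g) - w h' (lie_br h g)),
      (forall h g g' : G, w h (lie_br g g') = w (lie_br g' h) g - w (lie_br g h) g'),
      (forall h g h' g' : G, lie_br (w h g) (w h' g') = w (lie_br h g) (lie_br h' g')) &
      ((0 < q)%N ->
      [/\ (forall h' h g : G, lie_br (b h') (w h g) =
                        w (lie_br (h' *+ q) h) g + w h (lie_br (h' *+ q) g)),
          (forall (l l' : R) (h h' : G), b (l *: h + l' *: h') = l *: b h + l' *: b h'),
          (forall h h' : G, lie_br (b h) (b h') = w (h *+ q) (h' *+ q)) &
          (forall h g : G, b (lie_br h g) = w h g *+ q)])].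

(* h /\ g = 0 in the presented Lie algebra G /\^q G iff its image vanishes
   under every q-exterior pairing into every Lie algebra over R. *)
Definition qext_zero (R : pzRingType) (q : nat) (G : lieAlgebra R) (h g : G) : Prop :=
  forall (L : lieAlgebra R) (w : G -> G -> L) (b : G -> L),
    qext_pairing q w b -> w h g = 0.

Definition qext_center (R : pzRingType) (q : nat) (G : lieAlgebra R) (g : G) : Prop :=
  forall x : G, qext_zero q g x.

(* Main.v *)
Require Import Defs.
From HB Require Import structures.
From mathcomp Require Import all_boot all_order all_algebra.
From Stdlib Require Import ClassicalEpsilon.
Import GRing.Theory.
Set Implicit Arguments. Unset Strict Implicit. Unset Printing Implicit Defensive.
Local Open Scope ring_scope.

Lemma self_add0 (V : zmodType) (v : V) : v = v + v -> v = 0.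
Proof. by move=> e; apply: (addrI v); rewrite addr0 -e. Qed.

Section LieFacts.
Variable (R : pzRingType) (L : lieAlgebra R).
Implicit Types x y z : L.
Local Notation br := (@lie_br R L).

Lemma br0l z : br 0 z = 0.
Proof.
case: (lie_ax L) => h1 _ _ _.
have := h1 1 0 0 z; rewrite !scale1r !addr0; exact: self_add0.
Qed.
Lemma br0r z : br z 0 = 0.
Proof.
case: (lie_ax L) => _ h1 _ _.
have := h1 1 0 0 z; rewrite !scale1r !addr0; exact: self_add0.
Qed.
Lemma brDl x y z : br (x + y) z = br x z + br y z.
Proof. by case: (lie_ax L) => h1 _ _ _; have := h1 1 x y z; rewrite !scale1r. Qed.
Lemma brDr x y z : br z (x + y) = br z x + br z y.
Proof. by case: (lie_ax L) => _ h1 _ _; have := h1 1 x y z; rewrite !scale1r. Qed.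
Lemma brZl a x z : br (a *: x) z = a *: br x z.
Proof. by case: (lie_ax L) => h1 _ _ _; have := h1 a x 0 z; rewrite !addr0 br0l addr0. Qed.
Lemma brZr a x z : br z (a *: x) = a *: br z x.
Proof. by case: (lie_ax L) => _ h1 _ _; have := h1 a x 0 z; rewrite !addr0 br0r addr0. Qed.
Lemma brNl x z : br (- x) z = - br x z.
Proof. by rewrite -scaleN1r brZl scaleN1r. Qed.
Lemma brNr x z : br z (- x) = - br z x.
Proof. by rewrite -scaleN1r brZr scaleN1r. Qed.
Lemma brBl x y z : br (x - y) z = br x z - br y z.
Proof. by rewrite brDl brNl. Qed.
Lemma brBr x y z : br z (x - y) = br z x - br z y.
Proof. by rewrite brDr brNr. Qed.
Lemma brMnl x z n : br (x *+ n) z = br x z *+ n.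
Proof. by elim: n => [|n IH]; rewrite ?br0l // !mulrS brDl IH. Qed.
Lemma brMnr x z n : br z (x *+ n) = br z x *+ n.
Proof. by elim: n => [|n IH]; rewrite ?br0r // !mulrS brDr IH. Qed.
Lemma brxx x : br x x = 0.
Proof. by case: (lie_ax L). Qed.
Lemma br_anti x y : br y x = - br x y.
Proof.
have := brxx (x + y); rewrite brDl !brDr !brxx add0r addr0 => /eqP.
by rewrite addrC addr_eq0 => /eqP.
Qed.
Lemma br_jacobi x y z : br x (br y z) + br y (br z x) + br z (br x y) = 0.
Proof. by case: (lie_ax L). Qed.
Lemma br_der x y z : br x (br y z) = br (br x y) z + br y (br x z).
Proof.
rewrite (br_anti z (br x y)) (br_anti z x) brNr.
have J := br_jacobi x y z.
set A := br x _ in J *; set B := br y _ in J *; set C := br z _ in J *.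
apply/eqP; rewrite -subr_eq0 opprD !opprK.
by rewrite (addrC C) addrA J.
Qed.
End LieFacts.

Section HomFacts.
Variable (R : pzRingType) (L1 L2 : lieAlgebra R) (phi : L1 -> L2).
Hypothesis Hphi : lie_hom phi.
Lemma hom0 : phi 0 = 0.
Proof.
case: Hphi => h _; have := h 1 0 0; rewrite !scale1r !addr0; exact: self_add0.
Qed.
Lemma homD x y : phi (x + y) = phi x + phi y.
Proof. by case: Hphi => h _; have := h 1 x y; rewrite !scale1r. Qed.
Lemma homZ a x : phi (a *: x) = a *: phi x.
Proof. by case: Hphi => h _; have := h a x 0; rewrite !addr0 hom0 addr0. Qed.
Lemma homN x : phi (- x) = - phi x.
Proof. by rewrite -scaleN1r homZ scaleN1r. Qed.
Lemma homB x y : phi (x - y) = phi x - phi y.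
Proof. by rewrite homD homN. Qed.
Lemma homMn x n : phi (x *+ n) = phi x *+ n.
Proof. by elim: n => [|n IH]; rewrite ?hom0 // !mulrS homD IH. Qed.
Lemma homBr x y : phi (lie_br x y) = lie_br (phi x) (phi y).
Proof. by case: Hphi. Qed.
End HomFacts.

Definition linP (R : pzRingType) (V W : lmodType R) (phi : V -> W) :=
  forall a x y, phi (a *: x + y) = a *: phi x + phi y.

Section LinFacts.
Variables (R : pzRingType) (V W : lmodType R) (phi : V -> W) (Hl : linP phi).
Lemma lin0 : phi 0 = 0.
Proof. by have := Hl 1 0 0; rewrite !scale1r !addr0; exact: self_add0. Qed.
Lemma linD x y : phi (x + y) = phi x + phi y.
Proof. by have := Hl 1 x y; rewrite !scale1r. Qed.
Lemma linZ a x : phi (a *: x) = a *: phi x.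
Proof. by have := Hl a x 0; rewrite !addr0 lin0 addr0. Qed.
Lemma linN x : phi (- x) = - phi x.
Proof. by rewrite -scaleN1r linZ scaleN1r. Qed.
Lemma linB x y : phi (x - y) = phi x - phi y.
Proof. by rewrite linD linN. Qed.
Lemma linMn x n : phi (x *+ n) = phi x *+ n.
Proof. by elim: n => [|n IH]; rewrite ?lin0 // !mulrS linD IH. Qed.
Lemma lin_sum (I : Type) (ls : seq I) (F : I -> V) :
  phi (\sum_(p <- ls) F p) = \sum_(p <- ls) phi (F p).
Proof. by elim: ls => [|p ls IH]; rewrite ?big_nil ?lin0 // !big_cons linD IH. Qed.
Lemma lin_span (S : V -> Prop) : (forall x, S x -> phi x = 0) ->
  forall x, Defs.span S x -> phi x = 0.
Proof.
move=> H x; elim => [y /H //| |y z _ e1 _ e2|a y _ e]; first exact: lin0.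
  by rewrite linD e1 e2 addr0.
by rewrite linZ e scaler0.
Qed.
End LinFacts.

Lemma hom_lin (R : pzRingType) (L1 L2 : lieAlgebra R) (phi : L1 -> L2) :
  lie_hom phi -> linP phi.
Proof. by case. Qed.

Lemma spanN (R : pzRingType) (V : lmodType R) (S : V -> Prop) x : Defs.span S x -> Defs.span S (- x).
Proof. by move=> h; rewrite -scaleN1r; apply: span_scale. Qed.
Lemma spanB (R : pzRingType) (V : lmodType R) (S : V -> Prop) x y :
  Defs.span S x -> Defs.span S y -> Defs.span S (x - y).
Proof. by move=> hx hy; apply: span_add => //; apply: spanN. Qed.

Section Ab.
Variables (R : pzRingType) (V : lmodType R).
Lemma ab_ax : lie_axioms (fun _ _ : V => 0).
Proof. by split => *; rewrite ?scaler0 ?addr0. Qed.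
Definition abLie : lieAlgebra R := LieAlgebra ab_ax.
End Ab.

Section Sub.
Variables (R : pzRingType) (L : lieAlgebra R) (P : L -> Prop).
Hypotheses (P0 : P 0) (PD : forall x y, P x -> P y -> P (x + y))
  (PZ : forall a x, P x -> P (a *: x)) (PB : forall x y, P x -> P y -> P (lie_br x y)).
Definition pb (x : L) : bool := if excluded_middle_informative (P x) then true else false.
Lemma pbP x : pb x <-> P x. Proof. by rewrite /pb; case: excluded_middle_informative. Qed.
Definition subV := {x : L | pb x}.
HB.instance Definition _ := Choice.on subV.
Lemma Psub (x : subV) : P (val x). Proof. by apply/pbP; case: x. Qed.
Definition mk {x} (h : P x) : subV := exist _ x (proj2 (pbP x) h).
Lemma PN (x : L) : P x -> P (- x). Proof. by move=> h; rewrite -scaleN1r; apply: PZ. Qed.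
Definition s0 : subV := mk P0.
Definition sadd (x y : subV) : subV := mk (PD (Psub x) (Psub y)).
Definition sopp (x : subV) : subV := mk (PN (Psub x)).
Definition sscale (a : R) (x : subV) : subV := mk (PZ a (Psub x)).
Definition sbr (x y : subV) : subV := mk (PB (Psub x) (Psub y)).
Lemma saddA : associative sadd. Proof. by move=> x y z; apply: val_inj; rewrite /= addrA. Qed.
Lemma saddC : commutative sadd. Proof. by move=> x y; apply: val_inj; rewrite /= addrC. Qed.
Lemma sadd0 : left_id s0 sadd. Proof. by move=> x; apply: val_inj; rewrite /= add0r. Qed.
Lemma saddN : left_inverse s0 sopp sadd. Proof. by move=> x; apply: val_inj; rewrite /= addNr. Qed.
HB.instance Definition _ := GRing.isZmodule.Build subV saddA saddC sadd0 saddN.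
Lemma sscaleA a b v : sscale a (sscale b v) = sscale (a * b) v. Proof. by apply: val_inj; rewrite /= scalerA. Qed.
Lemma sscale1 : left_id 1 sscale. Proof. by move=> x; apply: val_inj; rewrite /= scale1r. Qed.
Lemma sscaleDr : right_distributive sscale +%R. Proof. by move=> a x y; apply: val_inj; rewrite /= scalerDr. Qed.
Lemma sscaleDl v : {morph sscale^~ v : a b / a + b}. Proof. by move=> a b; apply: val_inj; rewrite /= scalerDl. Qed.
HB.instance Definition _ := GRing.Zmodule_isLmodule.Build R subV sscaleA sscale1 sscaleDr sscaleDl.
Lemma sub_ax : lie_axioms sbr.
Proof.
case: (lie_ax L) => h1 h2 h3 h4.
split.
- by move=> a x y z; apply: val_inj; rewrite /= h1.
- by move=> a x y z; apply: val_inj; rewrite /= h2.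
- by move=> x; apply: val_inj; rewrite /= h3.
- by move=> x y z; apply: val_inj; rewrite /= h4.
Qed.
Definition subLie : lieAlgebra R := LieAlgebra sub_ax.
Lemma val_hom : lie_hom (fun x : subLie => val x).
Proof. by split. Qed.
End Sub.

Lemma comp_hom (R : pzRingType) (L1 L2 L3 : lieAlgebra R) (f1 : L1 -> L2) (f2 : L2 -> L3) :
  lie_hom f1 -> lie_hom f2 -> lie_hom (fun x => f2 (f1 x)).
Proof.
move=> [h1 h1'] [h2 h2']; split; first by move=> a x y; rewrite h1 h2.
by move=> x y; rewrite h1' h2'.
Qed.
Lemma id_hom (R : pzRingType) (L : lieAlgebra R) : lie_hom (fun x : L => x).
Proof. by []. Qed.

Lemma gen_all (R : pzRingType) (X : Type) (f : lieAlgebra R) (i : X -> f)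
  (Hfree : is_free_lie i) (P : f -> Prop)
  (P0 : P 0) (PD : forall x y, P x -> P y -> P (x + y))
  (PZ : forall a x, P x -> P (a *: x)) (PB : forall x y, P x -> P y -> P (lie_br x y))
  (Pi : forall x, P (i x)) : forall s, P s.
Proof.
have [[psi [hpsi epsi]] _] := Hfree (subLie P0 PD PZ PB) (fun x => mk (Pi x)).
have [_ uniq] := Hfree f i.
move=> s.
have e : val (psi s) = s.
  apply: (uniq (fun y => val (psi y)) (fun y => y)) => //.
  - exact: comp_hom hpsi (val_hom P0 PD PZ PB).
  - by move=> x; rewrite epsi.
rewrite -e; exact: Psub.
Qed.

Definition eqb {X : Type} (x y : X) : bool :=
  if excluded_middle_informative (x = y) then true else false.
Lemma eqbP {X : Type} (x y : X) : eqb x y <-> x = y.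
Proof. by rewrite /eqb; case: excluded_middle_informative. Qed.

Lemma list_zero (R : pzRingType) (V : lmodType R) (X : Type) (B : X -> V)
  (ls : seq (R * X)) :
  (forall x0, \sum_(p <- ls) (if eqb p.2 x0 then p.1 else 0) = 0) ->
  \sum_(p <- ls) p.1 *: B p.2 = 0.
Proof.
move: {2}(size ls) (leqnn (size ls)) => n; elim: n ls => [|n IH] [|p ls] //=;
  rewrite ?big_nil // => hs H.
set x1 := p.2.
rewrite (bigID (fun p0 : R * X => eqb p0.2 x1)) /=.
have -> : \sum_(p0 <- p :: ls | eqb p0.2 x1) p0.1 *: B p0.2 =
          (\sum_(p0 <- p :: ls | eqb p0.2 x1) p0.1) *: B x1.
  by rewrite scaler_suml; apply: eq_bigr => p0 /eqbP ->.
have -> : \sum_(p0 <- p :: ls | eqb p0.2 x1) p0.1 = 0.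
  by rewrite big_mkcond; apply: H.
rewrite scale0r add0r -big_filter; apply: IH.
  rewrite /= (_ : eqb p.2 x1 = true) /=; last exact/eqbP.
  by rewrite size_filter; apply: leq_trans (count_size _ _) _.
move=> x0; rewrite big_filter.
case: (excluded_middle_informative (x0 = x1)) => [->|ne].
  by rewrite big1 // => p0 /negbTE; case: eqb.
rewrite -[RHS](H x0) [RHS](bigID (fun p0 : R * X => eqb p0.2 x1)) /=.
rewrite [X in _ = X + _]big1 ?add0r // => p0 /eqbP ->.
by case: (eqb x1 x0) / (@idP (eqb x1 x0)) => // /eqbP e; case: ne.
Qed.

Section Prod.
Variables (R : pzRingType) (L G : lieAlgebra R) (w : G -> G -> L).
Hypotheses (wl : forall a x y z, w (a *: x + y) z = a *: w x z + w y z)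
  (wr : forall a x y z, w z (a *: x + y) = a *: w z x + w z y)
  (wxx : forall x, w x x = 0)
  (wj : forall x y z, w x (lie_br y z) + w y (lie_br z x) + w z (lie_br x y) = 0).
Definition pbr (u v : (L * G)%type) : (L * G)%type := (w u.2 v.2, lie_br u.2 v.2).
Lemma prod_ax : lie_axioms pbr.
Proof.
case: (lie_ax G) => h1 h2 h3 h4.
split.
- by move=> a [l x] [l' y] [l'' z]; rewrite /pbr /= wl h1.
- by move=> a [l x] [l' y] [l'' z]; rewrite /pbr /= wr h2.
- by move=> [l x]; rewrite /pbr /= wxx h3.
- move=> [l x] [l' y] [l'' z]; rewrite /pbr /=.
  change ((w x (lie_br y z) + w y (lie_br z x) + w z (lie_br x y), lie_br x (lie_br y z) + lie_br y (lie_br z x) + lie_br z (lie_br x y)) = ((0 : L), (0 : G))).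
  by rewrite wj h4.
Qed.
Definition prodLie : lieAlgebra R := LieAlgebra prod_ax.
Lemma snd_hom : lie_hom (fun u : prodLie => u.2).
Proof. by split. Qed.
End Prod.

Section Back.
Variables (Lam : comPzRingType) (q : nat) (g f c : lieAlgebra Lam).
Variables (d : f -> g) (Hd : lie_hom d) (Hdsurj : forall y : g, exists x : f, d x = y).
Variables (r : f -> Prop) (Hr : forall x : f, r x <-> d x = 0).
Variables (pi : f -> c) (Hpi : lie_hom pi) (Hpisurj : forall z : c, exists x : f, pi x = z).
Variable (Hker : forall x : f, pi x = 0 <-> sharp r q x).

Definition sec (y : g) : f := proj1_sig (constructive_indefinite_description _ (Hdsurj y)).
Lemma secP y : d (sec y) = y.
Proof. exact: proj2_sig (constructive_indefinite_description _ (Hdsurj y)). Qed.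
Definition tau (y : g) : c := pi (sec y).

Lemma K1 a y : d a = 0 -> pi (lie_br a y) = 0.
Proof. move=> da; apply/Hker; apply: span_gen; left; exists a, y; split => //; exact/Hr. Qed.
Lemma K2 a : d a = 0 -> pi (a *+ q) = 0.
Proof. move=> da; apply/Hker; apply: span_gen; right; exists a; split => //; exact/Hr. Qed.

Lemma L1 a a' v : d a = d a' -> lie_br (pi a) v = lie_br (pi a') v.
Proof.
move=> e; have [y <-] := Hpisurj v; apply/eqP; rewrite -subr_eq0.
rewrite -!(homBr Hpi) -(homB Hpi) -brBl K1 //.
by rewrite (homB Hd) e subrr.
Qed.
Lemma L2 a a' : d a = d a' -> pi a *+ q = pi a' *+ q.
Proof.
move=> e; apply/eqP; rewrite -subr_eq0 -!(homMn Hpi) -(homB Hpi) -mulrnBl K2 //.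
by rewrite (homB Hd) e subrr.
Qed.

Definition wB (h k : g) : c := lie_br (tau h) (tau k).
Definition bB (h : g) : c := tau h *+ q.

Lemma wd a a' : wB (d a) (d a') = lie_br (pi a) (pi a').
Proof.
rewrite /wB /tau (L1 (pi (sec (d a'))) (secP (d a))).
rewrite br_anti (L1 (pi a) (secP (d a'))) -br_anti //.
Qed.
Lemma bq a : bB (d a) = pi a *+ q.
Proof. exact: L2 (secP _). Qed.

Lemma pairB : qext_pairing q wB bB.
Proof.
split; [split| | | |].
- move=> l h k; have [a <-] := Hdsurj h; have [a' <-] := Hdsurj k.
  by rewrite -!(homZ Hd) !wd !(homZ Hpi) brZl brZr.
- move=> h h' k; have [a <-] := Hdsurj h; have [a' <-] := Hdsurj h'; have [a'' <-] := Hdsurj k.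
  by rewrite -!(homD Hd) !wd (homD Hpi) brDl.
- move=> h k k'; have [a <-] := Hdsurj h; have [a' <-] := Hdsurj k; have [a'' <-] := Hdsurj k'.
  by rewrite -!(homD Hd) !wd (homD Hpi) brDr.
- by move=> h; have [a <-] := Hdsurj h; rewrite wd brxx.
- move=> h h' k; have [a <-] := Hdsurj h; have [a' <-] := Hdsurj h'; have [a'' <-] := Hdsurj k.
  rewrite -!(homBr Hd) !wd !(homBr Hpi) (br_der (pi a)).
  by rewrite addrK.
- move=> h k k'; have [a <-] := Hdsurj h; have [a' <-] := Hdsurj k; have [a'' <-] := Hdsurj k'.
  rewrite -!(homBr Hd) !wd !(homBr Hpi) (br_der (pi a)).
  rewrite (br_anti (pi a) (pi a'')) brNl (br_anti (pi a') (lie_br (pi a) (pi a''))) opprK.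
  rewrite (br_anti (pi a) (pi a')) brNl opprK addrC //.
- move=> h k h' k'; have [a <-] := Hdsurj h; have [a' <-] := Hdsurj k.
  have [a'' <-] := Hdsurj h'; have [a''' <-] := Hdsurj k'.
  by rewrite -!(homBr Hd) !wd !(homBr Hpi).
- move=> _; split.
  + move=> h' h k; have [a' <-] := Hdsurj h'; have [a <-] := Hdsurj h; have [a'' <-] := Hdsurj k.
    rewrite bq -!(homMn Hd) -!(homBr Hd) !wd !(homBr Hpi) -(homMn Hpi).
    exact: br_der.
  + move=> l l' h h'; have [a <-] := Hdsurj h; have [a' <-] := Hdsurj h'.
    rewrite -!(homZ Hd) -(homD Hd) !bq (homD Hpi) !(homZ Hpi) mulrnDl.
    by rewrite !scalerMnr.
  + move=> h h'; have [a <-] := Hdsurj h; have [a' <-] := Hdsurj h'.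
    by rewrite !bq -!(homMn Hd) wd !(homMn Hpi).
  + move=> h k; have [a <-] := Hdsurj h; have [a' <-] := Hdsurj k.
    by rewrite -(homBr Hd) bq wd (homBr Hpi).
Qed.

Variables (dbar : c -> g) (Hdbar : forall x : f, dbar (pi x) = d x).

Lemma back (z : c) : qext_center q (dbar z) -> lie_center z.
Proof.
move=> H v; have [z0 ez] := Hpisurj z; subst z; have [y <-] := Hpisurj v.
have := H (d y) c wB bB pairB.
by rewrite Hdbar wd.
Qed.
End Back.

Definition Cset (R : pzRingType) (F : lieAlgebra R) (x : F) : Prop :=
  exists a b : F, x = lie_br a b.

Section Fwd.
Variables (Lam : comPzRingType) (q : nat) (Htf : q_torsion_free Lam q) (g : lieAlgebra Lam).
Variables (X : Type) (f : lieAlgebra Lam) (i : X -> f) (Hfree : is_free_lie i).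
Variables (d : f -> g) (Hd : lie_hom d).
Variables (r : f -> Prop) (Hr : forall x : f, r x <-> d x = 0).
Variables (L : lieAlgebra Lam) (w : g -> g -> L) (b : g -> L) (Hpair : qext_pairing q w b).

Lemma wl a x y z : w (a *: x + y) z = a *: w x z + w y z.
Proof. by case: Hpair => [[w1 w2 w3 w11] _ _ _ _]; rewrite w2 -(w1 a x z).1. Qed.
Lemma wr a x y z : w z (a *: x + y) = a *: w z x + w z y.
Proof. by case: Hpair => [[w1 w2 w3 w11] _ _ _ _]; rewrite w3 -(w1 a z x).2. Qed.
Lemma wxx x : w x x = 0.
Proof. by case: Hpair => [[w1 w2 w3 w11] _ _ _ _]. Qed.
Lemma w0l z : w 0 z = 0.
Proof. by have := wl 1 0 0 z; rewrite !scale1r !addr0; exact: self_add0. Qed.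
Lemma w0r z : w z 0 = 0.
Proof. by have := wr 1 0 0 z; rewrite !scale1r !addr0; exact: self_add0. Qed.
Lemma wDl x y z : w (x + y) z = w x z + w y z.
Proof. by have := wl 1 x y z; rewrite !scale1r. Qed.
Lemma wDr x y z : w z (x + y) = w z x + w z y.
Proof. by have := wr 1 x y z; rewrite !scale1r. Qed.
Lemma wNr x z : w z (- x) = - w z x.
Proof. by have := wr (-1) x 0 z; rewrite !addr0 w0r addr0 !scaleN1r. Qed.
Lemma wanti x y : w y x = - w x y.
Proof.
have := wxx (x + y); rewrite wDl !wDr !wxx add0r addr0 => /eqP.
by rewrite addrC addr_eq0 => /eqP.
Qed.
Lemma wj x y z : w x (lie_br y z) + w y (lie_br z x) + w z (lie_br x y) = 0.
Proof.
case: Hpair => [_ w4 _ _ _].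
rewrite (wanti (lie_br x y) z) w4 (br_anti x z) wNr.
by rewrite subrr.
Qed.

Definition E : lieAlgebra Lam := prodLie wl wr wxx wj.
Definition Phi : f -> E :=
  proj1_sig (constructive_indefinite_description _ ((Hfree (L:=E) (fun x => ((0 : L), d (i x)))).1)).
Lemma PhiP : lie_hom Phi /\ forall x, Phi (i x) = ((0 : L), d (i x)).
Proof. by rewrite /Phi; case: constructive_indefinite_description. Qed.
Lemma hsnd a : (Phi a).2 = d a.
Proof.
have [_ uniq] := Hfree (L:=g) (fun x => d (i x)).
apply: (uniq (fun a => (Phi a).2) d) => //.
- exact: comp_hom PhiP.1 (snd_hom wl wr wxx wj).
- by move=> x; rewrite PhiP.2.
Qed.
Definition phi (a : f) : L := (Phi a).1.
Lemma phi_lin : linP phi.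
Proof. by move=> a x y; rewrite /phi (hom_lin PhiP.1). Qed.
Lemma phi_br a a' : phi (lie_br a a') = w (d a) (d a').
Proof. by rewrite /phi (homBr PhiP.1) /= !hsnd. Qed.

Lemma dec t : sharp r q t -> exists s0, [/\ d s0 = 0,
  Defs.span (@Cset _ f) (t - s0 *+ q) & phi t = phi s0 *+ q].
Proof.
elim.
- move=> x [[s [y' [rs ->]]]|[s [rs ->]]].
  + exists 0; split; first exact: hom0 Hd.
    * by rewrite mul0rn subr0; apply: span_gen; exists s, y'.
    * by rewrite phi_br (proj1 (Hr s) rs) w0l (lin0 phi_lin) mul0rn.
  + exists s; split; first exact/Hr.
    * by rewrite subrr; apply: span_0.
    * exact: (linMn phi_lin).
- exists 0; split; first exact: hom0 Hd.
  + by rewrite mul0rn subr0; apply: span_0.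
  + by rewrite (lin0 phi_lin) mul0rn.
- move=> x y _ [s1 [d1 sp1 e1]] _ [s2 [d2 sp2 e2]]; exists (s1 + s2); split.
  + by rewrite (homD Hd) d1 d2 addr0.
  + by rewrite mulrnDl opprD addrACA; apply: span_add.
  + by rewrite !(linD phi_lin) e1 e2 mulrnDl.
- move=> a x _ [s1 [d1 sp1 e1]]; exists (a *: s1); split.
  + by rewrite (homZ Hd) d1 scaler0.
  + by rewrite scalerMnr -scalerBr; apply: span_scale.
  + by move: e1; rewrite /phi !(homZ PhiP.1) /= => ->; rewrite scalerMnr.
Qed.

Variables (c : lieAlgebra Lam) (pi : f -> c) (Hpi : lie_hom pi).
Variable (Hker : forall x : f, pi x = 0 <-> sharp r q x).

Definition Pc (s : f) : Prop := exists ls : seq (Lam * X),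
  Defs.span (@Cset _ f) (s - \sum_(p <- ls) p.1 *: i p.2).

Lemma Pc_all s : Pc s.
Proof.
apply: (gen_all Hfree).
- by exists [::]; rewrite big_nil subr0; apply: span_0.
- move=> x y [l1 h1] [l2 h2]; exists (l1 ++ l2); rewrite big_cat /= opprD addrACA.
  exact: span_add.
- move=> a x [l1 h1]; exists [seq (a * p.1, p.2) | p <- l1]; rewrite big_map /=.
  have -> : \sum_(j <- l1) (a * j.1) *: i j.2 = a *: \sum_(j <- l1) j.1 *: i j.2.
    by rewrite scaler_sumr; apply: eq_bigr => p _; rewrite scalerA.
  by rewrite -scalerBr; apply: span_scale.
- move=> x y _ _; exists [::]; rewrite big_nil subr0; apply: span_gen; by exists x, y.
- move=> x; exists [:: (1, x)]; rewrite big_cons big_nil /= addr0 scale1r subrr.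
  exact: span_0.
Qed.

Lemma fwd_core (z0 y : f) : lie_center (pi z0) -> w (d z0) (d y) = 0.
Proof.
move=> Hz.
have Hsh : sharp r q (lie_br z0 y) by apply: (proj1 (Hker _)); rewrite (homBr Hpi); apply: Hz.
have [s0 [ds0 sp0 e0]] := dec Hsh.
rewrite -phi_br e0.
case: (posnP q) => [->|qpos]; first by rewrite mulr0n.
case: Hpair => _ _ _ _ /(_ qpos) [_ b8 _ b10].
have b0 : b 0 = 0 by have := b8 0 0 0 0; rewrite !scale0r !addr0.
pose u (a : f) : L := phi a *+ q - b (d a).
have ulin : linP u.
  move=> a x y'; rewrite /u (hom_lin Hd) -[d y' in LHS]scale1r b8 scale1r.
  rewrite phi_lin mulrnDl scalerMnr scalerBr opprD addrACA //.
have uC : forall x, Cset x -> u x = 0.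
  by move=> x [a1 [a2 ->]]; rewrite /u phi_br (homBr Hd) b10 subrr.
have -> : phi s0 *+ q = u s0 by rewrite /u ds0 b0 subr0.
have [ls hls] := Pc_all s0.
have us0 : u s0 = \sum_(p <- ls) p.1 *: u (i p.2).
  have := lin_span ulin uC hls; rewrite (linB ulin) (lin_sum ulin) => /eqP.
  rewrite subr_eq0 => /eqP ->; apply: eq_bigr => p _; exact: (linZ ulin).
rewrite us0; apply: (list_zero (fun x => u (i x))) => x0.
have [[psi [hpsi epsi]] _] := Hfree (L := abLie (Lam^o)) (fun x => if eqb x x0 then (1 : Lam) else 0).
have psiC : forall x, Cset x -> psi x = 0.
  by move=> x [a1 [a2 ->]]; rewrite (homBr hpsi).
have hpl := hom_lin hpsi.
have qs0 : Defs.span (@Cset _ f) (s0 *+ q).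
  have -> : s0 *+ q = lie_br z0 y - (lie_br z0 y - s0 *+ q) by rewrite opprB addrC subrK.
  by apply: spanB => //; apply: span_gen; exists z0, y.
have ps0 : psi s0 = 0.
  apply: Htf => //; have := lin_span hpl psiC qs0; rewrite (linMn hpl); exact.
have := lin_span hpl psiC hls; rewrite (linB hpl) (lin_sum hpl) ps0 sub0r => /eqP.
rewrite oppr_eq0 => /eqP H0; rewrite -[RHS]H0; apply: eq_bigr => p _; rewrite (linZ hpl) epsi.
by case: eqb => /=; [exact: (esym (mulr1 _)) | exact: (esym (mulr0 _))].
Qed.
End Fwd.

Theorem corollary6p7 (Lam : comPzRingType) (q : nat) (Htf : q_torsion_free Lam q)
  (g : lieAlgebra Lam)
  (X : Type) (f : lieAlgebra Lam) (i : X -> f) (Hfree : is_free_lie i)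
  (d : f -> g) (Hd : lie_hom d) (Hdsurj : forall y : g, exists x : f, d x = y)
  (r : f -> Prop) (Hr : forall x : f, r x <-> d x = 0)
  (c : lieAlgebra Lam) (pi : f -> c) (Hpi : lie_hom pi)
  (Hpisurj : forall z : c, exists x : f, pi x = z)
  (Hker : forall x : f, pi x = 0 <-> sharp r q x)
  (dbar : c -> g) (Hdbar : forall x : f, dbar (pi x) = d x) :
  forall z : c, lie_center z <-> qext_center q (dbar z).
Proof.
move=> z; split.
- move=> Hz x L w b Hpair.
  have [z0 ez] := Hpisurj z; subst z.
  have [y <-] := Hdsurj x.
  rewrite Hdbar.
  exact: (fwd_core Htf Hfree Hd Hr Hpair Hpi Hker y Hz).
- exact: (back Hd Hdsurj Hr Hpi Hpisurj Hker Hdbar).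
Qed.
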